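(* Let $e_0,\dots,e_\eta$ be a fuzzy derivation of $e_\eta$ from $e_0$ using the fuzzy rule base $B$, and assume every value $e_\kappa(X)(u)$ ($\kappa\le\eta$, $X\in\mathbb X$, $u\in\mathbb U$) lies in $C$. Then $$T_D\cup S_U\cup S_{\mathbb A}\cup T_B\cup S_{e_0}(\tau/\tilde z)\models_{\mathcal K} S_{e_\eta}(\tau/\tilde s^{\eta}(\tilde z)).$$
   Context: Fuzzy rules. Let $\mathbb U$ be a nonempty countable set; a fuzzy set over $\mathbb U$ is a map $\mathbb U\to[0,1]$. $\mathrm{height}(A)=\sup_{u\in\mathbb U}A(u)$; $\mathrm{cut}(c,A)(u)=\min(c,A(u))$; $(A_1\cap A_2)(u)=\min(A_1(u),A_2(u))$; the union of a finite family of fuzzy sets is the pointwise maximum (the empty union is the constant $0$). Let $\mathbb A$ be a nonempty finite set of fuzzy sets over $\mathbb U$ and $\mathbb X$ a nonempty finite set of variables. A fuzzy rule $r$ is an expression ''IF $X_0$ is $A_0$ and $\dots$ and $X_n$ is $A_n$ THEN $X$ is $A$'' with $X_i,X\in\mathbb X$, $A_i,A\in\mathbb A$; $\mathrm{out}(r)=X$. A fuzzy rule base $B$ is a nonempty finite set of fuzzy rules. A fuzzy variable assignment is a map $e$ from $\mathbb X$ to fuzzy sets over $\mathbb U$. $\|X\|^r_e=\mathrm{cut}(\min_{i\le n}\mathrm{height}(e(X_i)\cap A_i),A)$ and $\|X\|^B_e=\bigcup\{\|X\|^r_e: r\in B,\mathrm{out}(r)=X\}$. A fuzzy derivation of $e_\eta$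 from $e_0$ using $B$ is a sequence $e_0,\dots,e_\eta$ of fuzzy variable assignments with $e_\kappa(X)=\|X\|^B_{e_{\kappa-1}}$ for all $1\le\kappa\le\eta$, $X\in\mathbb X$. Gödel logic: formulae with truth constants $\bar c$ ($c\in C$, $C\subseteq[0,1]$ countable), connectives $\wedge(=\min),\vee(=\max)$, $\to$ ($\|\varphi\to\psi\|=1$ if $\|\varphi\|\le\|\psi\|$ else $\|\psi\|$), $\leftrightarrow$ ($\min$ of both implications), $\eqcirc$ (value $1$ if the two values are equal, else $0$), quantifiers $\forall=\inf$, $\exists=\sup$; predicates are $[0,1]$-valued; $\mathcal I\models\varphi$ iff $\varphi$ has value $1$ under every variable assignment. An order clause is a finite set of literals $\varepsilon_1\eqcirc\varepsilon_2$ or $\varepsilon_1\prec\varepsilon_2$ (the latter has value $1$ iff the value of $\varepsilon_1$ is $<$ that of $\varepsilon_2$), true under an assignment if some literal has value 1; a model of a set of clauses/formulae satisfies each under all assignments. Truth-constant convention: $C\supseteq\{0,1\}\cup\bigcup_{A\in\mathbb A}A[\mathbb U]\cup\bigcup_{X}e_0(X)[\mathbb U]$. Encoding. Let $\mathcal L^*$ be a countable first-order language containing (pairwise distinct) a constant $\tilde z$, a unary function symbol $\tilde s$, binary function symbols $\mathit{frac}$, $\mathit{{-}frac}$, unary predicates $\mathit{nat},\mathit{rat},\mathit{time},\mathit{uni}$, a unary predicate $\tilde G_A$ for each $A\in\mathbb A$, binary predicates $\tilde H_X$ ($X\in\mathbb X$) and $\tilde H^r_X$ ($r\in B$, $\mathrm{out}(r)=X$).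 A natural numeral is $\tilde s^n(\tilde z)$. A rational numeral is $\mathit{frac}(\tilde s^m(\tilde z),\tilde s^n(\tilde z))$ with $n>0$ (value $m/n$) or $\mathit{{-}frac}(\tilde s^m(\tilde z),\tilde s^n(\tilde z))$ with $m,n>0$ (value $-m/n$). Fix an injection $\gamma:\mathbb U\to\mathbb Q$ and a set $\tilde{\mathbb U}$ of rational numerals with $\{\|\tilde u\|:\tilde u\in\tilde{\mathbb U}\}=\gamma[\mathbb U]$; $\langle\tilde u\rangle=\gamma^{-1}(\|\tilde u\|)\in\mathbb U$. $\mathcal K$ is the class of interpretations $\mathcal I$ for $\mathcal L^*$ whose universe is the set of ground terms of $\mathcal L^*$ and in which every function symbol is interpreted by term formation ($f^{\mathcal I}(t_1,\dots,t_m)=f(t_1,\dots,t_m)$); predicates are arbitrary. $\Gamma\models_{\mathcal K}\Phi$ means every $\mathcal I\in\mathcal K$ with $\mathcal I\models\Gamma$ satisfies $\mathcal I\models\Phi$. $T_D=\{\mathit{nat}(\tilde z),\ \mathit{nat}(\tilde s(x))\leftrightarrow\mathit{nat}(x),\ \mathit{rat}(\mathit{frac}(x,\tilde s(y)))\leftrightarrow\mathit{nat}(x)\wedge\mathit{nat}(y),\ \mathit{rat}(\mathit{{-}frac}(\tilde s(x),\tilde s(y)))\leftrightarrow\mathit{nat}(x)\wedge\mathit{nat}(y)\}\cup\{\mathit{nat}(f(x_1,\dots,x_m))\eqcirc\bar0: f\notin\{\tilde z,\tilde s\}\}\cup\{\mathit{rat}(f(x_1,\dots,x_m))\eqcirc\bar0: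 f\notin\{\mathit{frac},\mathit{{-}frac}\}\}\cup\{\mathit{time}(x)\leftrightarrow\mathit{nat}(x),\ \mathit{uni}(x)\to\mathit{rat}(x)\}$ ($f$ ranges over function symbols of $\mathcal L^*$, $m$ its arity, $x_i$ distinct variables). $S_U=\{\mathit{uni}(\tilde u)\eqcirc\bar1:\tilde u\in\tilde{\mathbb U}\}\cup\{\mathit{uni}(t)\eqcirc\bar0: t \text{ ground term of }\mathcal L^*,\ t\notin\tilde{\mathbb U}\}$. $S_{\mathbb A}=\{\tilde G_A(\tilde u)\eqcirc\overline{A(\langle\tilde u\rangle)}: A\in\mathbb A,\tilde u\in\tilde{\mathbb U}\}$. For a fuzzy variable assignment $e$: $S_e=\{\tilde H_X(\tau,\tilde u)\eqcirc\overline{e(X)(\langle\tilde u\rangle)}: X\in\mathbb X,\tilde u\in\tilde{\mathbb U}\}$ with $\tau$ a variable; $S_e(\tau/t)$ is its instance with $\tau$ replaced by the ground term $t$. For the rule $r$ above: $\varphi_r(\tau,y)=\mathit{time}(\tau)\wedge\mathit{uni}(y)\to\big(\tilde H^r_X(\tilde s(\tau),y)\eqcirc((\bigwedge_{i=0}^n\exists x\,(\mathit{uni}(x)\wedge\tilde H_{X_i}(\tau,x)\wedge\tilde G_{A_i}(x)))\wedge\tilde G_A(y))\big)$. $T_B=\{\varphi_r(\tau,y): r\in B\}\cup\{\mathit{time}(\tau)\wedge\mathit{uni}(y)\to(\tilde H_X(\tilde s(\tau),y)\eqcirc\bigvee_{r\in B,\mathrm{out}(r)=X}\tilde H^r_X(\tilde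 s(\tau),y)): X\in\mathbb X\}$ (an empty disjunction is $\bar0$). *)

(* Defs.v *)
From HB Require Import structures.
From mathcomp Require Import all_boot all_order all_algebra.
From mathcomp Require Import boolp classical_sets cardinality reals.
Set Implicit Arguments. Unset Strict Implicit. Unset Printing Implicit Defensive.
Import Order.TTheory GRing.Theory Num.Theory.
Local Open Scope ring_scope.
Local Open Scope classical_set_scope.

Inductive fsym (Fe : Type) := Fz | Fs | Ffrac | Fmfrac | Fext of Fe.
Arguments Fz {Fe}. Arguments Fs {Fe}. Arguments Ffrac {Fe}. Arguments Fmfrac {Fe}.

Definition farity {Fe} (arE : Fe -> nat) (f : fsym Fe) : nat :=
  match f with Fz => 0 | Fs => 1 | Ffrac => 2 | Fmfrac => 2 | Fext e => arE e end.

Inductive term (Fe : Type) := Var of nat | App of fsym Fe & list (term Fe).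
Arguments Var {Fe}. Arguments App {Fe}. Arguments Fext {Fe}.

(* ground, arity-respecting terms: the universe of every interpretation in K *)
Fixpoint gwf {Fe} (arE : Fe -> nat) (t : term Fe) : bool :=
  match t with
  | Var _ => false
  | App f ts => (size ts == farity arE f) && all (gwf arE) ts
  end.

Fixpoint tsubst {Fe} (s : nat -> term Fe) (t : term Fe) : term Fe :=
  match t with
  | Var n => s n
  | App f ts => App f (map (tsubst s) ts)
  end.

Definition nzero {Fe} : term Fe := App Fz [::].
Definition sapp {Fe} (t : term Fe) : term Fe := App Fs [:: t].

Fixpoint natnum {Fe} (t : term Fe) : option nat :=
  match t with
  | App Fz [::] => Some 0%N
  | App Fs [:: t'] => omap S (natnum t')
  | _ => None
  end.

Definition numval {Fe} (t : term Fe) : option rat :=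
  match t with
  | App Ffrac [:: a; b] =>
      match natnum a, natnum b with
      | Some m, Some n => if (0 < n)%N then Some (m%:R / n%:R) else None
      | _, _ => None
      end
  | App Fmfrac [:: a; b] =>
      match natnum a, natnum b with
      | Some m, Some n => if (0 < m)%N && (0 < n)%N then Some (- (m%:R / n%:R)) else None
      | _, _ => None
      end
  | _ => None
  end.

Definition rule (Xv Av : Type) := (seq (Xv * Av) * Xv * Av)%type.
Definition rprem {Xv Av} (r : rule Xv Av) := r.1.1.
Definition rout {Xv Av} (r : rule Xv Av) := r.1.2.
Definition rconc {Xv Av} (r : rule Xv Av) := r.2.

(* Predicate symbols: nat, rat, time, uni, G_A, H_X, H^r_X (X = out r),
   plus arbitrary extra ones (type Pe). *)
Inductive psym (Xv Av Pe : Type) :=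
  Pnat | Prat | Ptime | Puni | PG of Av | PH of Xv | PHr of rule Xv Av | Pext of Pe.
Arguments Pnat {Xv Av Pe}. Arguments Prat {Xv Av Pe}.
Arguments Ptime {Xv Av Pe}. Arguments Puni {Xv Av Pe}.
Arguments PG {Xv Av Pe}. Arguments PH {Xv Av Pe}. Arguments PHr {Xv Av Pe}. Arguments Pext {Xv Av Pe}.

(* Gödel-logic formulas with truth constants and the connective ≗ (Eqc) *)
Inductive form (R Fe P : Type) :=
| Cst of R
| Atom of P & list (term Fe)
| And of form R Fe P & form R Fe P
| Or of form R Fe P & form R Fe P
| Imp of form R Fe P & form R Fe P
| Iff of form R Fe P & form R Fe P
| Eqc of form R Fe P & form R Fe P
| All of nat & form R Fe P
| Ex of nat & form R Fe P.
Arguments Cst {R Fe P}. Arguments Atom {R Fe P}. Arguments And {R Fe P}.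
Arguments Or {R Fe P}. Arguments Imp {R Fe P}. Arguments Iff {R Fe P}.
Arguments Eqc {R Fe P}. Arguments All {R Fe P}. Arguments Ex {R Fe P}.

Fixpoint bigAnd {R : realType} {Fe P} (s : seq (form R Fe P)) : form R Fe P :=
  match s with [::] => Cst 1 | [:: f] => f | f :: s' => And f (bigAnd s') end.
Fixpoint bigOr {R : realType} {Fe P} (s : seq (form R Fe P)) : form R Fe P :=
  match s with [::] => Cst 0 | [:: f] => f | f :: s' => Or f (bigOr s') end.

Section Semantics.
Context {R : realType} {Fe P : Type} (arE : Fe -> nat).

Definition upd (s : nat -> term Fe) (n : nat) (t : term Fe) : nat -> term Fe :=
  fun m => if m == n then t else s m.

Definition impv (a b : R) : R := if a <= b then 1 else b.

(* I interprets predicates; function symbols are interpreted by term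
   formation, so the value of a term under s is its substitution instance. *)
Fixpoint eval (I : P -> seq (term Fe) -> R) (s : nat -> term Fe)
    (f : form R Fe P) : R :=
  match f with
  | Cst c => c
  | Atom p ts => I p (map (tsubst s) ts)
  | And a b => Num.min (eval I s a) (eval I s b)
  | Or a b => Num.max (eval I s a) (eval I s b)
  | Imp a b => impv (eval I s a) (eval I s b)
  | Iff a b => Num.min (impv (eval I s a) (eval I s b)) (impv (eval I s b) (eval I s a))
  | Eqc a b => if eval I s a == eval I s b then 1 else 0
  | All n a => inf [set eval I (upd s n t) a | t in [set t | gwf arE t]]
  | Ex n a => sup [set eval I (upd s n t) a | t in [set t | gwf arE t]]
  end.

Definition holds (I : P -> seq (term Fe) -> R) (f : form R Fe P) : Prop :=
  forall s : nat -> term Fe, (forall n, gwf arE (s n)) -> eval I s f = 1.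

Definition Kentails (Gamma Delta : set (form R Fe P)) : Prop :=
  forall I : P -> seq (term Fe) -> R,
    (forall p ts, 0 <= I p ts <= 1) ->
    (forall f, Gamma f -> holds I f) ->
    forall f, Delta f -> holds I f.
End Semantics.

Section Fuzzy.
Context {R : realType} {U : Type} {Xv : finType} {Av : Type}.

Definition height (f : U -> R) : R := sup (range f).

(* ||X||^r_e (u) = cut(min_i height(e(X_i) ∩ A_i), A)(u); premises nonempty *)
Definition rule_val (Aval : Av -> U -> R) (e : Xv -> U -> R) (r : rule Xv Av)
  : U -> R :=
  fun u => Num.min
    (\big[Num.min/1]_(p <- rprem r) height (fun v => Num.min (e p.1 v) (Aval p.2 v)))
    (Aval (rconc r) u).

(* ||X||^B_e (u) = max over rules of B with output X (empty max = 0) *)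
Definition fuzzy_step (Aval : Av -> U -> R) (B : seq (rule Xv Av))
    (e : Xv -> U -> R) : Xv -> U -> R :=
  fun X u => \big[Num.max/0]_(r <- B | rout r == X) rule_val Aval e r u.
End Fuzzy.

Section Encoding.
Context {R : realType} {Fe : Type} (arE : Fe -> nat) {Pe : Type}
  {U : Type} {Xv Av : finType}.
Local Notation fm := (form R Fe (psym Xv Av Pe)).

Definition T_D : set fm := fun f =>
  f = Atom Pnat [:: nzero]
  \/ f = Iff (Atom Pnat [:: sapp (Var 0)]) (Atom Pnat [:: Var 0])
  \/ f = Iff (Atom Prat [:: App Ffrac [:: Var 0; sapp (Var 1)]])
             (And (Atom Pnat [:: Var 0]) (Atom Pnat [:: Var 1]))
  \/ f = Iff (Atom Prat [:: App Fmfrac [:: sapp (Var 0); sapp (Var 1)]])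
             (And (Atom Pnat [:: Var 0]) (Atom Pnat [:: Var 1]))
  \/ (exists g : fsym Fe, g <> Fz /\ g <> Fs /\
        f = Eqc (Atom Pnat [:: App g (map Var (iota 0 (farity arE g)))]) (Cst 0))
  \/ (exists g : fsym Fe, g <> Ffrac /\ g <> Fmfrac /\
        f = Eqc (Atom Prat [:: App g (map Var (iota 0 (farity arE g)))]) (Cst 0))
  \/ f = Iff (Atom Ptime [:: Var 0]) (Atom Pnat [:: Var 0])
  \/ f = Imp (Atom Puni [:: Var 0]) (Atom Prat [:: Var 0]).

Definition S_U (Ut : set (term Fe)) : set fm := fun f =>
  (exists t, Ut t /\ f = Eqc (Atom Puni [:: t]) (Cst 1))
  \/ (exists t, gwf arE t /\ ~ Ut t /\ f = Eqc (Atom Puni [:: t]) (Cst 0)).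

(* <t> is the u with gamma u = ||t|| *)
Definition S_A (gamma : U -> rat) (Ut : set (term Fe)) (Aval : Av -> U -> R)
  : set fm := fun f =>
  exists (A : Av) (t : term Fe) (u : U), Ut t /\ numval t = Some (gamma u) /\
    f = Eqc (Atom (PG A) [:: t]) (Cst (Aval A u)).

Definition S_e (gamma : U -> rat) (Ut : set (term Fe)) (e : Xv -> U -> R)
    (t0 : term Fe) : set fm := fun f =>
  exists (X : Xv) (t : term Fe) (u : U), Ut t /\ numval t = Some (gamma u) /\
    f = Eqc (Atom (PH X) [:: t0; t]) (Cst (e X u)).

(* variables: tau = 0, y = 1, x = 2 *)
Definition guard_ty : fm := And (Atom Ptime [:: Var 0]) (Atom Puni [:: Var 1]).

Definition prem_form (p : Xv * Av) : fm :=
  Ex 2 (And (And (Atom Puni [:: Var 2]) (Atom (PH p.1) [:: Var 0; Var 2]))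
            (Atom (PG p.2) [:: Var 2])).

Definition phi_r (r : rule Xv Av) : fm :=
  Imp guard_ty
    (Eqc (Atom (PHr r) [:: sapp (Var 0); Var 1])
         (And (bigAnd (map prem_form (rprem r))) (Atom (PG (rconc r)) [:: Var 1]))).

Definition psi_X (B : seq (rule Xv Av)) (X : Xv) : fm :=
  Imp guard_ty
    (Eqc (Atom (PH X) [:: sapp (Var 0); Var 1])
         (bigOr [seq Atom (PHr r) [:: sapp (Var 0); Var 1] | r <- B & rout r == X])).

Definition T_B (B : seq (rule Xv Av)) : set fm := fun f =>
  (exists r, r \in B /\ f = phi_r r) \/ (exists X, f = psi_X B X).
End Encoding.

(* Main.v *)
Require Import Defs.
From HB Require Import structures.
From mathcomp Require Import all_boot all_order all_algebra.
From mathcomp Require Import boolp classical_sets cardinality reals.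
Import Order.TTheory GRing.Theory Num.Theory.
Local Open Scope ring_scope.
Local Open Scope classical_set_scope.

Fixpoint tsubst_gwf {Fe} (arE : Fe -> nat) s (t : term Fe) {struct t} : gwf arE t -> tsubst s t = t.
Proof.
case: t => [n|f ts] //= /andP[_ H]. congr App.
elim: ts H => //= a l IH /andP[Ha Hl]. by rewrite (tsubst_gwf _ arE) // IH.
Qed.

Lemma natnumE {Fe} (t : term Fe) n : natnum t = Some n -> t = iter n sapp nzero.
Proof.
elim: n t => [|n IH] [m|[]ts] //=; case: ts => [|a [|b ts]] //=;
  case E: (natnum a) => [k|] //= [Ek]; subst k.
by rewrite /sapp (IH a E).
Qed.
Arguments natnumE {Fe t n}.

Lemma gwf_iter {Fe} (arE : Fe -> nat) n : gwf arE (iter n sapp nzero).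
Proof. by elim: n => //= n IH; rewrite /= IH. Qed.

Lemma numval_gwf {Fe} (arE : Fe -> nat) (t : term Fe) q : numval t = Some q -> gwf arE t.
Proof.
case: t => [//|[]ts] //=; case: ts => [|a [|b []]] //=;
  case Ea: (natnum a) => [m|] //; case Eb: (natnum b) => [n|] // _;
  by rewrite (natnumE Ea) (natnumE Eb) !gwf_iter.
Qed.
Arguments numval_gwf {Fe} arE {t q}.

Lemma sup_eq_of {R : realType} (E F : set R) :
  (forall x, E x -> exists2 y, F y & x <= y) -> F `<=` E -> F !=set0 ->
  (forall x, E x -> x <= 1) -> sup E = sup F.
Proof.
move=> EF FE [y0 Fy0] E1.
have hE : has_sup E by split; [exists y0; apply: FE | exists 1 => x /E1].
have hF : has_sup F by split; [exists y0 | exists 1 => x /FE /E1].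
apply/le_anti/andP; split.
- apply: sup_le => //; last by exists y0; apply: FE.
  by move=> x /EF [y Fy xy]; apply/downP; exists y.
- apply: sup_le => //; last by exists y0.
  by move=> x /FE Ex; apply/downP; exists x.
Qed.

Lemma iff1 {R : realType} (a b : R) : a <= 1 -> b <= 1 ->
  Num.min (impv a b) (impv b a) = 1 -> a = b.
Proof.
rewrite /impv => a1 b1; case: ifP => ab; case: ifP => ba.
- by move=> _; apply/eqP; rewrite eq_le ab ba.
- rewrite minC min_l // => e; apply/eqP; rewrite eq_le ab /= e; exact: b1.
- rewrite minC min_r // => e; apply/eqP; rewrite eq_le ba andbT e; exact: a1.
- by have := le_total a b; rewrite ab ba.
Qed.

Lemma eval_bigAnd {R : realType} {Fe P A : Type} (arE : Fe -> nat) (I : P -> seq (term Fe) -> R) (s : nat -> term Fe)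
  (g : A -> Defs.form R Fe P) l :
  (forall x, Defs.eval arE I s (g x) <= 1) ->
  Defs.eval arE I s (bigAnd (map g l)) = \big[Num.min/1]_(x <- l) Defs.eval arE I s (g x).
Proof.
move=> h; elim: l => [|a l IH]; first by rewrite big_nil.
rewrite big_cons -IH; case: l {IH} => [|b l] //=.
by rewrite minC min_r.
Qed.

Lemma eval_bigOr {R : realType} {Fe P A : Type} (arE : Fe -> nat) (I : P -> seq (term Fe) -> R) (s : nat -> term Fe)
  (g : A -> Defs.form R Fe P) l :
  (forall x, 0 <= Defs.eval arE I s (g x)) ->
  Defs.eval arE I s (bigOr (map g l)) = \big[Num.max/0]_(x <- l) Defs.eval arE I s (g x).
Proof.
move=> h; elim: l => [|a l IH]; first by rewrite big_nil.
rewrite big_cons -IH; case: l {IH} => [|b l] //=.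
by rewrite maxC max_r.
Qed.
Theorem lemma4 (R : realType) (U : countType) (Fe : countType) (arE : Fe -> nat)
  (Pe : countType) (Xv Av : finType) (Aval : Av -> U -> R)
  (B : seq (rule Xv Av)) (C : set R) (gamma : U -> rat) (Ut : set (term Fe))
  (es : nat -> Xv -> U -> R) (eta : nat) :
  (* U nonempty; X and A nonempty finite sets of variables / fuzzy sets *)
  inhabited U -> (0 < #|Xv|)%N -> (0 < #|Av|)%N ->
  injective Aval -> (forall A u, 0 <= Aval A u <= 1) ->
  (* B a nonempty rule base; each rule has at least one premise *)
  B != [::] -> (forall r, r \in B -> rprem r != [::]) ->
  (* e_0, ..., e_eta is a fuzzy derivation *)
  (forall X u, 0 <= es 0%N X u <= 1) ->
  (forall k, (0 < k <= eta)%N -> forall X u, es k X u = fuzzy_step Aval B (es k.-1) X u) ->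
  (* truth constants *)
  countable C -> (forall c, C c -> 0 <= c <= 1) -> C 0 -> C 1 ->
  (forall A u, C (Aval A u)) -> (forall X u, C (es 0%N X u)) ->
  (forall k X u, (k <= eta)%N -> C (es k X u)) ->
  (* the numerals for U *)
  injective gamma ->
  (forall t, Ut t -> exists u, numval t = Some (gamma u)) ->
  (forall u, exists t, Ut t /\ numval t = Some (gamma u)) ->
  Kentails arE
    (T_D arE `|` S_U (Pe := Pe) (Xv := Xv) (Av := Av) arE Ut
       `|` S_A (Pe := Pe) (Xv := Xv) gamma Ut Aval
       `|` T_B (Pe := Pe) B
       `|` S_e (Pe := Pe) (Av := Av) gamma Ut (es 0%N) nzero)
    (S_e (Pe := Pe) (Av := Av) gamma Ut (es eta) (iter eta sapp nzero)).
Proof.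
move=> [u0] _ _ _ Aval01 _ _ _ Hstep _ C01 _ _ _ _ HCes _ Hnum Hsurj.
move=> I I01 HG f [X [t [u [Utt [nt ->]]]]] s sg /=.
have Ib p ts : 0 <= I p ts <= 1 by [].
have esb k X' u' : (k <= eta)%N -> 0 <= es k X' u' <= 1.
  by move=> hk; apply: C01; apply: HCes.
have Ab A' u' : 0 <= Aval A' u' <= 1 by [].
have gr t' (s' : nat -> term Fe) : Ut t' -> tsubst s' t' = t'.
  by move=> /Hnum [v nv]; exact: (tsubst_gwf arE s' t' (numval_gwf arE nv)).
have grI k (s' : nat -> term Fe) : tsubst s' (iter k sapp nzero) = iter k sapp nzero.
  exact: (tsubst_gwf arE s' _ (gwf_iter arE k)).
pose s0 : nat -> term Fe := fun _ => nzero.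
have s0g : forall n, gwf arE (s0 n) by [].
have eqc : forall s' a b, (forall n, gwf arE (s' n)) ->
    (T_D arE `|` S_U (Pe := Pe) (Xv := Xv) (Av := Av) arE Ut
       `|` S_A (Pe := Pe) (Xv := Xv) gamma Ut Aval
       `|` T_B (Pe := Pe) B
       `|` S_e (Pe := Pe) (Av := Av) gamma Ut (es 0%N) nzero) (Eqc a b) ->
    Defs.eval arE I s' a = Defs.eval arE I s' b.
  move=> s' a b sg' /HG /(_ s' sg') /=; case: eqP => // _ /eqP.
  by rewrite eq_sym oner_eq0.
have nat1 k : I Pnat [:: iter k sapp nzero] = 1.
  elim: k => [|k IH].
    have := HG (Atom Pnat [:: nzero]) _ s0 s0g; apply; by do 4 left; left.
  have := HG (Iff (Atom Pnat [:: sapp (Var 0)]) (Atom Pnat [:: Var 0])) _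
    (fun _ => iter k sapp nzero) (fun _ => gwf_iter arE k).
  move=> /(_ _)/iff1 h; rewrite /= -IH; apply: h.
  - by case/andP: (Ib Pnat [:: sapp (iter k sapp nzero)]).
  - by case/andP: (Ib Pnat [:: iter k sapp nzero]).
  - by do 4 left; right; left.
have time1 k : I Ptime [:: iter k sapp nzero] = 1.
  have := HG (Iff (Atom Ptime [:: Var 0]) (Atom Pnat [:: Var 0])) _
    (fun _ => iter k sapp nzero) (fun _ => gwf_iter arE k).
  move=> /(_ _)/iff1 h; rewrite /= -(nat1 k); apply: h.
  - by case/andP: (Ib Ptime [:: iter k sapp nzero]).
  - by case/andP: (Ib Pnat [:: iter k sapp nzero]).
  - by do 4 left; do 6 right; left.
have uni1 t' : Ut t' -> I Puni [:: t'] = 1.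
  move=> U'; have := eqc s0 (Atom Puni [:: t']) (Cst 1) s0g.
  rewrite /= gr //; apply; do 3 left; right; left; by exists t'.
have uni0 t' : gwf arE t' -> ~ Ut t' -> I Puni [:: t'] = 0.
  move=> g' U'; have := eqc s0 (Atom Puni [:: t']) (Cst 0) s0g.
  rewrite /= (tsubst_gwf arE s0 t' g'); apply; do 3 left; right; right; by exists t'.
have GA A' t' u' : Ut t' -> numval t' = Some (gamma u') -> I (PG A') [:: t'] = Aval A' u'.
  move=> U' n'; have := eqc s0 (Atom (PG A') [:: t']) (Cst (Aval A' u')) s0g.
  rewrite /= gr //; apply; do 2 left; right; by exists A', t', u'.
have impv1 (a b : R) : @impv R 1 (if a == b then 1 else 0) = 1 -> a = b.
  rewrite /impv; case: eqP => // _; case: ifP => [h|_]; first by move: h; rewrite ler10.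
  by move/eqP; rewrite eq_sym oner_eq0.
have key k : (k <= eta)%N -> forall X' t' u', Ut t' -> numval t' = Some (gamma u') ->
    I (PH X') [:: iter k sapp nzero; t'] = es k X' u'.
  elim: k => [|k IH] hk X' t' u' U' n'.
    have := eqc s0 (Atom (PH X') [:: nzero; t']) (Cst (es 0%N X' u')) s0g.
    rewrite /= gr //; apply; right; by exists X', t', u'.
  have hk' : (k <= eta)%N by apply: ltnW.
  pose s' := upd (upd s0 0 (iter k sapp nzero)) 1 t'.
  have sg' : forall n, gwf arE (s' n).
    move=> n; rewrite /s' /upd; case: ifP => _; first exact: numval_gwf n'.
    by case: ifP => _ //; apply: gwf_iter.
  have hpsi := HG (psi_X B X') ltac:(left; right; right; by exists X') s' sg'.
  have s'0 : s' 0%N = iter k sapp nzero by [].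
  have s'1 : s' 1%N = t' by [].
  rewrite /= s'0 s'1 time1 uni1 // minxx in hpsi.
  move/impv1: hpsi => ->.
  rewrite Hstep //= /fuzzy_step.
  rewrite eval_bigOr; last by move=> r /=; case/andP: (Ib (PHr r) [:: sapp (s' 0%N); s' 1%N]).
  rewrite -[RHS]big_filter; apply: eq_big_seq => r; rewrite mem_filter => /andP[_ rB].
  have hphi := HG (phi_r r) ltac:(left; right; left; by exists r) s' sg'.
  rewrite /= s'0 s'1 time1 uni1 // minxx in hphi.
  move/impv1: hphi => /= ->.
  rewrite (GA _ t' u') //.
  have prem p : Defs.eval arE I s' (prem_form p) =
      height (fun v => Num.min (es k p.1 v) (Aval p.2 v)).
    rewrite /prem_form /height /=.
    have u2 t0 : upd s' 2 t0 2 = t0 by rewrite /upd eqxx.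
    have u0' t0 : upd s' 2 t0 0 = iter k sapp nzero by [].
    have ek v : 0 <= es k p.1 v <= 1 by apply: esb.
    apply: sup_eq_of.
    - move=> x [t0 gt0 <-]; rewrite !u2 u0'.
      case: (pselect (Ut t0)) => [U0|nU0].
        have [v nv] := Hnum t0 U0.
        exists (Num.min (es k p.1 v) (Aval p.2 v)); first by exists v.
        rewrite uni1 // (IH hk' _ _ v) // (GA _ t0 v) //.
        by case/andP: (ek v) => _ a1; rewrite [Num.min 1 _]minC (min_l a1).
      exists (Num.min (es k p.1 u0) (Aval p.2 u0)); first by exists u0.
      rewrite uni0 //; apply: (@le_trans _ _ 0).
        by rewrite ge_min ge_min lexx.
      rewrite le_min; case/andP: (ek u0) => -> _; by case/andP: (Ab p.2 u0).
    - move=> y [v _ <-]; have [t0 [U0 nv]] := Hsurj v.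
      exists t0; first by have := numval_gwf arE nv.
      rewrite !u2 u0' uni1 // (IH hk' _ _ v) // (GA _ t0 v) //.
      by case/andP: (ek v) => _ a1; rewrite [Num.min 1 _]minC (min_l a1).
    - by exists (Num.min (es k p.1 u0) (Aval p.2 u0)); exists u0.
    - move=> x [t0 _ <-]; rewrite ge_min; apply/orP; right.
      by case/andP: (Ib (PG p.2) [:: upd s' 2 t0 2]).
  rewrite eval_bigAnd; last first.
    move=> p; rewrite prem /height; apply: ge_sup.
      by exists (Num.min (es k p.1 u0) (Aval p.2 u0)); exists u0.
    move=> x [v _ <-]; rewrite ge_min; apply/orP; right; by case/andP: (Ab p.2 v).
  rewrite /rule_val; congr Num.min; apply: eq_bigr => p _; exact: prem.
by rewrite grI gr // (key eta (leqnn eta) X t u Utt nt) eqxx.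
Qed.
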